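(* Let $S$ be as in the context. Then $|\mathcal{T}_k(S)|\le|\mathcal{T}_{k+1}(S)|$ for all $1\le k<n$, and for all $1\le k\le k'<n$ the number $m_{k'}$ of edges of the edge-reduced de Bruijn graph $\tilde G_{k'}(S)$, counted with multiplicity, satisfies $m_{k'}\ge|\mathcal{T}_k(S)|$.
   Context: $\Sigma$ is a finite totally ordered alphabet containing a symbol $\$$ smaller than every other symbol. $S$ is a string of length $n\ge 2$ over $\Sigma$ whose last character is $\$$ and in which $\$$ occurs nowhere else. The rotations of $S$ are the $n$ strings $S[i..n]S[1..i-1]$, $i\in[1,n]$. The rotation-trie $\mathcal{T}(S)$ is the trie of the set of rotations of $S$; $\mathcal{T}_k(S)$ denotes its set of nodes at depth $k$ (equivalently, the set of distinct length-$k$ prefixes of rotations of $S$). For $1\le k\le n$ let $Z_k(S)=S[1..n]S[1..k]$. The order-$k$ de Bruijn graph $G_k(S)$ is the directed multigraph with node set $\{Z_k(S)[i..i+k-1]: i\in[1,n]\}$ that, for every $z\in\Sigma^{k+1}$ occurring exactly $m\ge1$ times as a substring of $Z_k(S)$, contains the edge $(z[1..k],z[2..k+1])$ with multiplicity $m$. $x$ is a predecessor of $y$ (and $y$ a successor of $x$) if there is an edge $(x,y)$ of positive multiplicity. An edge $(x,y)$ is fusible if $y$ is the only successor of $x$ and $x$ is the only predecessor of $y$. The edge-reduced de Bruijn graph $\tilde G_k(S)$ is obtained from $G_k(S)$ by setting the multiplicity of every fusible edge to $1$. *)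

(* Defs.v *)
(* Strings are sequences over a finite alphabet T; positions are 0-based. *)
From mathcomp Require Import all_boot all_order.
Set Implicit Arguments. Unset Strict Implicit. Unset Printing Implicit Defensive.

Section RotTrie.
Variable T : eqType.

Definition substr (w : seq T) (l i : nat) : seq T := take l (drop i w).

Definition rotations (S : seq T) : seq (seq T) := [seq rot i S | i <- iota 0 (size S)].

(* T_k(S): the distinct length-k prefixes of rotations of S (nodes of the rotation trie at depth k). *)
Definition trie_level (S : seq T) (k : nat) : seq (seq T) :=
  undup [seq take k r | r <- rotations S].

Definition Zk (S : seq T) (k : nat) : seq T := S ++ take k S.

Definition occ (w z : seq T) : nat :=
  count (fun i => substr w (size z) i == z) (iota 0 (size w - size z).+1).

Definition dbg_nodes (S : seq T) (k : nat) : seq (seq T) :=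
  undup [seq substr (Zk S k) k i | i <- iota 0 (size S)].

Definition dbg_words (S : seq T) (k : nat) : seq (seq T) :=
  undup [seq substr (Zk S k) k.+1 i | i <- iota 0 (size (Zk S k) - k)].

(* multiplicity of the edge (x,y) in G_k(S): each z in Sigma^{k+1} occurring m>=1 times
   in Z_k(S) contributes the edge (z[1..k], z[2..k+1]) with multiplicity m. *)
Definition dbg_mult (S : seq T) (k : nat) (x y : seq T) : nat :=
  \sum_(z <- dbg_words S k) ((take k z == x) && (drop 1 z == y)) * occ (Zk S k) z.

Definition dbg_edge (S : seq T) (k : nat) (x y : seq T) : bool := 0 < dbg_mult S k x y.

(* fusible: y is the only successor of x and x is the only predecessor of y
   (all successors/predecessors are nodes of the graph) *)
Definition fusible (S : seq T) (k : nat) (x y : seq T) : bool :=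
  [&& dbg_edge S k x y,
      all (fun y' => dbg_edge S k x y' ==> (y' == y)) (dbg_nodes S k) &
      all (fun x' => dbg_edge S k x' y ==> (x' == x)) (dbg_nodes S k)].

Definition red_mult (S : seq T) (k : nat) (x y : seq T) : nat :=
  if fusible S k x y then 1 else dbg_mult S k x y.

Definition red_edges (S : seq T) (k : nat) : nat :=
  \sum_(x <- dbg_nodes S k) \sum_(y <- dbg_nodes S k) red_mult S k x y.

End RotTrie.

(* Main.v *)
Require Import Defs.
From mathcomp Require Import all_boot all_order.
From mathcomp Require Import zify.
Import Order.TTheory.

Section Aux.
Variable T : eqType.

Lemma substr_rot (S : seq T) k i : k <= size S -> i < size S ->
  substr (Zk S k) k i = take k (rot i S).
Proof.
move=> hk hi; rewrite /substr /Zk /rot drop_cat hi !take_cat size_drop.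
case: ifP => // _.
rewrite -!take_min; congr (_ ++ take _ S); lia.
Qed.

Lemma nodes_eq (S : seq T) k : k <= size S -> dbg_nodes S k = trie_level S k.
Proof.
move=> hk; rewrite /dbg_nodes /trie_level /rotations -map_comp; congr undup.
apply/eq_in_map => i; rewrite mem_iota => /andP[_ hi] /=.
exact: substr_rot.
Qed.

Lemma level_mono (S : seq T) k : size (trie_level S k) <= size (trie_level S k.+1).
Proof.
have -> : size (trie_level S k.+1) = size (map (take k) (trie_level S k.+1)) by rewrite size_map.
apply: uniq_leq_size; first exact: undup_uniq.
move=> x; rewrite /trie_level mem_undup => /mapP[r hr ->].
apply/mapP; exists (take k.+1 r); first by rewrite mem_undup; apply/mapP; exists r.
by rewrite -take_min; congr take; lia.
Qed.

Lemma level_mono2 (S : seq T) k k' : k <= k' -> size (trie_level S k) <= size (trie_level S k').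
Proof.
elim: k' => [|k' IH]; first by rewrite leqn0 => /eqP ->.
rewrite leq_eqVlt => /orP[/eqP -> //|h].
exact: leq_trans (IH h) (level_mono _ _).
Qed.

Lemma edge_pos (S : seq T) k i : k <= size S -> i < size S ->
  0 < dbg_mult S k (substr (Zk S k) k i) (substr (Zk S k) k (if i.+1 < size S then i.+1 else 0)).
Proof.
move=> hk hi; rewrite /dbg_mult.
set z := substr (Zk S k) k.+1 i.
have hsZ : size (Zk S k) = size S + k by rewrite /Zk size_cat size_takel.
have zin : z \in dbg_words S k.
  by rewrite /dbg_words mem_undup; apply/mapP; exists i => //; rewrite mem_iota hsZ; lia.
rewrite (bigD1_seq z zin (undup_uniq _)) /=.
apply: leq_trans (leq_addr _ _).
have szz : size z = k.+1 by rewrite /z /substr size_takel // size_drop hsZ; lia.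
rewrite muln_gt0; apply/andP; split.
  rewrite lt0b; apply/andP; split; apply/eqP.
    by rewrite /z /substr -take_min; congr take; lia.
  rewrite /z /substr -[k.+1]addn1 -take_drop drop_drop add1n.
  case: ifP => // hi1.
  have -> : i.+1 = size S by lia.
  by rewrite /Zk drop_cat ltnn subnn !drop0 -take_min minnn takel_cat.
rewrite /occ -has_count; apply/hasP; exists i; last by rewrite szz.
by rewrite mem_iota szz hsZ; lia.
Qed.

Lemma red_edges_ge (S : seq T) k : k <= size S -> 0 < size S ->
  size (dbg_nodes S k) <= red_edges S k.
Proof.
move=> hk hn; rewrite /red_edges -sum1_size big_seq [X in _ <= X]big_seq.
apply: leq_sum => x /[dup] hx.
rewrite {1}/dbg_nodes mem_undup => /mapP[i]; rewrite mem_iota => /andP[_ hi] ->.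
set j := if i.+1 < size S then i.+1 else 0.
have hj : j < size S by rewrite /j; case: ifP.
have yin : substr (Zk S k) k j \in dbg_nodes S k.
  by rewrite mem_undup; apply/mapP; exists j => //; rewrite mem_iota.
rewrite (bigD1_seq _ yin (undup_uniq _)) /=.
apply: leq_trans (leq_addr _ _).
rewrite /red_mult; case: ifP => // _.
exact: edge_pos.
Qed.

End Aux.

Theorem mainTheorem6 (d : Order.disp_t) (Sigma : finOrderType d) (dollar : Sigma)
  (S : seq Sigma) :
  (forall c : Sigma, c != dollar -> (dollar < c)%O) ->
  2 <= size S ->
  last dollar S = dollar ->
  count_mem dollar S = 1 ->
  (forall k, 1 <= k -> k < size S ->
     size (trie_level S k) <= size (trie_level S k.+1)) /\
  (forall k k', 1 <= k -> k <= k' -> k' < size S ->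
     size (trie_level S k) <= red_edges S k').
Proof.
move=> _ h2 _ _; split; first by move=> k _ _; apply: level_mono.
move=> k k' _ hkk hk'.
apply: leq_trans (@level_mono2 _ S k k' hkk) _.
rewrite -nodes_eq; last exact: ltnW.
apply: red_edges_ge; [exact: ltnW | exact: leq_trans h2].
Qed.
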